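(* Let $n\ge1$, $\mu>0$, let $B^1,\dots,B^n$ be independent standard Brownian motions and $G_{1,\mu}$ an independent Gamma process, and let $I^n_\mu(t)=(B^1(G_{1,\mu}(t)),\dots,B^n(G_{1,\mu}(t)))^T$. Its density $$q(\mathbf x,t)=\int_0^\infty\prod_{i=1}^n\frac{e^{-x_i^2/(2s)}}{\sqrt{2\pi s}}\,\frac{s^{\mu-1}e^{-s/t}}{t^\mu\Gamma(\mu)}\,ds,\qquad\mathbf x\in\mathbb R^n,\ t>0,$$ satisfies $$4\frac{\partial q}{\partial t}=(2\mu-n)\,\Delta q-\Delta(\mathbf x\cdot\nabla q),$$ where $\Delta=\sum_i\partial_{x_i}^2$ and $\mathbf x\cdot\nabla q=\sum_i x_i\partial_{x_i}q$.
   Context: $G_{1,\mu}(t)$ is a positive process whose value at time $t$ has density $s^{\mu-1}e^{-s/t}/(t^\mu\Gamma(\mu))$, $s>0$; all Brownian motions are subordinated by the same process $G_{1,\mu}$. *)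

(* Defs.v *)
From Stdlib Require Import Reals Lra Lia ClassicalEpsilon.
Open Scope R_scope.

Fixpoint fsum (n : nat) (f : nat -> R) : R :=
  match n with O => 0 | S m => fsum m f + f m end.
Fixpoint fprod (n : nat) (f : nat -> R) : R :=
  match n with O => 1 | S m => fprod m f * f m end.

Definition is_int_0_inf (f : R -> R) (l : R) : Prop :=
  forall eps, 0 < eps -> exists a0 b0, 0 < a0 /\
    forall a b, 0 < a < a0 -> b0 < b -> a < b ->
      exists pr : Riemann_integrable f a b, Rabs (RiemannInt pr - l) < eps.

Definition int_0_inf (f : R -> R) : R :=
  epsilon (inhabits 0) (is_int_0_inf f).

Definition Gamma (mu : R) : R :=
  int_0_inf (fun s => Rpower s (mu - 1) * exp (- s)).

(* points of R^n are represented by x : nat -> R, using coordinates 0..n-1 *)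
Definition upd (x : nat -> R) (i : nat) (h : R) : nat -> R :=
  fun j => if Nat.eq_dec j i then h else x j.

Definition partial_lim (f : (nat -> R) -> R) (i : nat) (x : nat -> R) (l : R) : Prop :=
  derivable_pt_lim (fun h => f (upd x i h)) (x i) l.

Definition pderiv (i : nat) (f : (nat -> R) -> R) (x : nat -> R) : R :=
  epsilon (inhabits 0) (partial_lim f i x).

Definition laplacian (n : nat) (f : (nat -> R) -> R) (x : nat -> R) : R :=
  fsum n (fun i => pderiv i (pderiv i f) x).

Definition x_grad (n : nat) (f : (nat -> R) -> R) (x : nat -> R) : R :=
  fsum n (fun i => x i * pderiv i f x).

Definition integrand (n : nat) (mu : R) (x : nat -> R) (t s : R) : R :=
  fprod n (fun i => exp (- (x i)^2 / (2 * s)) / sqrt (2 * PI * s))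
  * (Rpower s (mu - 1) * exp (- s / t) / (Rpower t mu * Gamma mu)).

Definition dens (n : nat) (mu : R) (x : nat -> R) (t : R) : R :=
  int_0_inf (integrand n mu x t).

Definition nonzero_vec (n : nat) (x : nat -> R) : Prop :=
  exists i, (i < n)%nat /\ x i <> 0.

Definition has_partials (n : nat) (f : (nat -> R) -> R) : Prop :=
  forall y i, nonzero_vec n y -> (i < n)%nat -> exists l, partial_lim f i y l.

(* Main.v *)
Require Import Defs.
From Stdlib Require Import Reals ZArith Lra Lia ClassicalEpsilon Classical FunctionalExtensionality.
Open Scope R_scope.

Lemma dmul f g x a b : derivable_pt_lim f x a -> derivable_pt_lim g x b ->
  derivable_pt_lim (fun y => f y * g y) x (a * g x + f x * b).
Proof. intros; exact (derivable_pt_lim_mult f g x a b H H0). Qed.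
Lemma dplus f g x a b : derivable_pt_lim f x a -> derivable_pt_lim g x b ->
  derivable_pt_lim (fun y => f y + g y) x (a + b).
Proof. intros; exact (derivable_pt_lim_plus f g x a b H H0). Qed.
Lemma dminus f g x a b : derivable_pt_lim f x a -> derivable_pt_lim g x b ->
  derivable_pt_lim (fun y => f y - g y) x (a - b).
Proof. intros; exact (derivable_pt_lim_minus f g x a b H H0). Qed.
Lemma dcomp f g x a b : derivable_pt_lim f x a -> derivable_pt_lim g (f x) b ->
  derivable_pt_lim (fun y => g (f y)) x (b * a).
Proof. intros; exact (derivable_pt_lim_comp f g x a b H H0). Qed.
Lemma dconst c x : derivable_pt_lim (fun _ => c) x 0.
Proof. exact (derivable_pt_lim_const c x). Qed.
Lemma did x : derivable_pt_lim (fun y => y) x 1.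
Proof. exact (derivable_pt_lim_id x). Qed.
Lemma dscal c f x a : derivable_pt_lim f x a -> derivable_pt_lim (fun y => c * f y) x (c * a).
Proof. intros. replace (c*a) with (0 * f x + c * a) by ring. apply dmul; auto. apply dconst. Qed.
Lemma dexp f x a : derivable_pt_lim f x a -> derivable_pt_lim (fun y => exp (f y)) x (exp (f x) * a).
Proof. intros. apply (dcomp f exp x a (exp (f x))); auto. apply derivable_pt_lim_exp. Qed.
Lemma dext f g x l : (forall y, f y = g y) -> derivable_pt_lim f x l -> derivable_pt_lim g x l.
Proof. intros. replace g with f; auto. extensionality y; auto. Qed.
Lemma dval f x l l' : l = l' -> derivable_pt_lim f x l -> derivable_pt_lim f x l'.
Proof. intros; subst; auto. Qed.

Lemma dlocal f g x l d : 0 < d -> (forall z, Rabs (z - x) < d -> f z = g z) ->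
  derivable_pt_lim f x l -> derivable_pt_lim g x l.
Proof.
  intros Hd He H eps Heps. destruct (H eps Heps) as [d1 Hd1].
  assert (0 < Rmin d1 d) by (apply Rmin_pos; [apply cond_pos|auto]).
  exists (mkposreal _ H0). intros h Hh Hh2. simpl in Hh2.
  rewrite <- !He. apply Hd1; auto. apply Rlt_le_trans with (1:=Hh2); apply Rmin_l.
  rewrite Rminus_diag, Rabs_R0; auto.
  replace (x+h-x) with h by ring. apply Rlt_le_trans with (1:=Hh2); apply Rmin_r.
Qed.

Lemma mvt_any f f' x y : (forall c, Rmin x y <= c <= Rmax x y -> derivable_pt_lim f c (f' c)) ->
  exists c, Rmin x y <= c <= Rmax x y /\ f y - f x = f' c * (y - x).
Proof.
  intros H. destruct (Rtotal_order x y) as [Hl|[He|Hg]].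
  - destruct (MVT_cor2 f f' x y Hl) as [c [Hc1 Hc2]].
    + intros; apply H. rewrite Rmin_left, Rmax_right by lra; auto.
    + exists c; split; auto. rewrite Rmin_left, Rmax_right by lra; lra.
  - subst. exists y. rewrite Rmin_left, Rmax_left by lra. split; [lra|ring].
  - destruct (MVT_cor2 f f' y x Hg) as [c [Hc1 Hc2]].
    + intros; apply H. rewrite Rmin_right, Rmax_left by lra; auto.
    + exists c; split. rewrite Rmin_right, Rmax_left by lra; lra. lra.
Qed.

Lemma dinv x : 0 < x -> derivable_pt_lim (fun y => / y) x (- / (x*x)).
Proof.
  intros. apply dlocal with (f := fun y => Rpower y (-(1))) (d := x); auto.
  - intros z Hz. assert (0 < z) by (apply Rabs_def2 in Hz; lra).
    rewrite Rpower_Ropp, Rpower_1; auto.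
  - apply dval with ((-(1)) * Rpower x (-(1) - 1)).
    + replace (-(1)-1) with (-(2)) by ring. rewrite Rpower_Ropp.
      replace 2 with (INR 2) by (simpl; ring). rewrite Rpower_pow by auto. simpl. field. lra.
    + apply derivable_pt_lim_power; auto.
Qed.

Lemma RI_lin f g a b l (pr1 : Riemann_integrable f a b) (pr2 : Riemann_integrable g a b)
  (pr3 : Riemann_integrable (fun x => f x + l * g x) a b) :
  RiemannInt pr3 = RiemannInt pr1 + l * RiemannInt pr2.
Proof. apply RiemannInt_P13. Qed.

Lemma RI_scal f a b k (pr : Riemann_integrable f a b) (pr' : Riemann_integrable (fun x => k * f x) a b) :
  RiemannInt pr' = k * RiemannInt pr.
Proof.
  assert (p0 := RiemannInt_P14 a b 0).
  assert (p3 : Riemann_integrable (fun x => fct_cte 0 x + k * f x) a b) by (apply RiemannInt_P10; auto).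
  assert (E : (fun x => k * f x) = (fun x => fct_cte 0 x + k * f x)) by
    (extensionality x; unfold fct_cte; ring).
  revert pr'; rewrite E; intros pr'. rewrite (RiemannInt_P5 pr' p3).
  rewrite (RiemannInt_P13 p0 pr p3), RiemannInt_P15. ring.
Qed.

Lemma RI_ext f g a b (pr1 : Riemann_integrable f a b) (pr2 : Riemann_integrable g a b) :
  a <= b -> (forall x, a <= x <= b -> f x = g x) -> RiemannInt pr1 = RiemannInt pr2.
Proof. intros; apply RiemannInt_P18; auto; intros; apply H0; lra. Qed.

Lemma RI_le f g a b (pr1 : Riemann_integrable f a b) (pr2 : Riemann_integrable g a b) :
  a <= b -> (forall x, a <= x <= b -> f x <= g x) -> RiemannInt pr1 <= RiemannInt pr2.
Proof. intros; apply RiemannInt_P19; auto; intros; apply H0; lra. Qed.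

Lemma RI_nonneg f a b (pr : Riemann_integrable f a b) :
  a <= b -> (forall x, a <= x <= b -> 0 <= f x) -> 0 <= RiemannInt pr.
Proof.
  intros. rewrite <- (Rmult_0_l (b - a)), <- (RiemannInt_P15 (RiemannInt_P14 a b 0)).
  apply RiemannInt_P19; auto. intros; unfold fct_cte; apply H0; lra.
Qed.

Lemma RI_abs f a b (pr : Riemann_integrable f a b) (pr2 : Riemann_integrable (fun x => Rabs (f x)) a b) :
  a <= b -> Rabs (RiemannInt pr) <= RiemannInt pr2.
Proof. apply RiemannInt_P17. Qed.

Lemma RI_chasles f a b c (pr1 : Riemann_integrable f a b) (pr2 : Riemann_integrable f b c)
  (pr3 : Riemann_integrable f a c) : RiemannInt pr1 + RiemannInt pr2 = RiemannInt pr3.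
Proof. apply RiemannInt_P26. Qed.

Lemma ftc (F f : R -> R) a b (pr : Riemann_integrable f a b) : a <= b ->
  (forall x, a <= x <= b -> derivable_pt_lim F x (f x)) ->
  (forall x, a <= x <= b -> continuity_pt f x) -> RiemannInt pr = F b - F a.
Proof.
  intros h HD HC. destruct (Req_dec a b) as [E|NE].
  - subst. rewrite RiemannInt_P9. ring.
  - set (P := primitive h (FTC_P1 h HC)).
    rewrite (RiemannInt_P20 h (FTC_P1 h HC) pr). fold P.
    destruct (MVT_cor2 (fun x => P x - F x) (fun _ => 0) a b) as [c [Hc _]]. lra.
    + intros c Hc. replace 0 with (f c - f c) by ring. apply dminus; auto.
      apply RiemannInt_P28; auto.
    + lra.
Qed.

Lemma is_int_unique f l1 l2 : is_int_0_inf f l1 -> is_int_0_inf f l2 -> l1 = l2.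
Proof.
  intros H1 H2. apply NNPP; intro Hne.
  assert (He : 0 < Rabs (l1 - l2) / 2) by (assert (0 < Rabs (l1-l2)) by (apply Rabs_pos_lt; lra); lra).
  destruct (H1 _ He) as [a1 [b1 [Ha1 K1]]]. destruct (H2 _ He) as [a2 [b2 [Ha2 K2]]].
  set (a := Rmin a1 a2 / 2). set (b := Rmax (Rmax b1 b2) a + 1).
  assert (0 < Rmin a1 a2) by (apply Rmin_pos; auto).
  assert (a < a1) by (unfold a; generalize (Rmin_l a1 a2); lra).
  assert (a < a2) by (unfold a; generalize (Rmin_r a1 a2); lra).
  assert (b1 < b) by (unfold b; generalize (Rmax_l b1 b2) (Rmax_l (Rmax b1 b2) a); lra).
  assert (b2 < b) by (unfold b; generalize (Rmax_r b1 b2) (Rmax_l (Rmax b1 b2) a); lra).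
  assert (a < b) by (unfold b; generalize (Rmax_r (Rmax b1 b2) a); lra).
  assert (0 < a) by (unfold a; lra).
  destruct (K1 a b) as [p1 E1]; try lra. destruct (K2 a b) as [p2 E2]; try lra.
  rewrite (RiemannInt_P5 p1 p2) in E1.
  assert (Rabs (l1 - l2) <= Rabs (RiemannInt p2 - l2) + Rabs (RiemannInt p2 - l1)).
  { replace (l1 - l2) with ((RiemannInt p2 - l2) - (RiemannInt p2 - l1)) by ring.
    eapply Rle_trans; [apply Rabs_triang|]. rewrite Rabs_Ropp. lra. }
  lra.
Qed.

Lemma int_0_inf_eq f l : is_int_0_inf f l -> int_0_inf f = l.
Proof.
  intros H. unfold int_0_inf. apply (is_int_unique f).
  - apply epsilon_spec. exists l; auto.
  - auto.
Qed.

Lemma is_int_ext f g l : (forall s, 0 < s -> f s = g s) -> is_int_0_inf f l -> is_int_0_inf g l.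
Proof.
  intros E H eps Heps. destruct (H eps Heps) as [a0 [b0 [Ha0 K]]].
  exists a0, b0; split; auto. intros a b Ha Hb Hab.
  destruct (K a b Ha Hb Hab) as [pr Hpr].
  assert (pr' : Riemann_integrable g a b).
  { apply Riemann_integrable_ext with f; auto. intros; apply E.
    rewrite Rmin_left in H0 by lra. lra. }
  exists pr'. rewrite <- (RI_ext f g a b pr pr'); auto. lra.
  intros; apply E; lra.
Qed.

Lemma is_int_lin f g l1 l2 c : is_int_0_inf f l1 -> is_int_0_inf g l2 ->
  is_int_0_inf (fun s => f s + c * g s) (l1 + c * l2).
Proof.
  intros H1 H2 eps Heps.
  assert (Hc : 0 < 2 * (Rabs c + 1)) by (generalize (Rabs_pos c); lra).
  assert (He : 0 < eps / (2 * (Rabs c + 1))) by (apply Rdiv_lt_0_compat; auto).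
  destruct (H1 _ He) as [a1 [b1 [Ha1 K1]]]. destruct (H2 _ He) as [a2 [b2 [Ha2 K2]]].
  exists (Rmin a1 a2), (Rmax b1 b2). split. apply Rmin_pos; auto.
  intros a b Ha Hb Hab.
  generalize (Rmin_l a1 a2) (Rmin_r a1 a2) (Rmax_l b1 b2) (Rmax_r b1 b2); intros.
  destruct (K1 a b) as [p1 E1]; try lra. destruct (K2 a b) as [p2 E2]; try lra.
  exists (RiemannInt_P10 c p1 p2). rewrite (RI_lin f g a b c p1 p2 (RiemannInt_P10 c p1 p2)).
  replace (RiemannInt p1 + c * RiemannInt p2 - (l1 + c * l2)) with
    ((RiemannInt p1 - l1) + c * (RiemannInt p2 - l2)) by ring.
  eapply Rle_lt_trans; [apply Rabs_triang|]. rewrite Rabs_mult.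
  assert (Rabs c * Rabs (RiemannInt p2 - l2) <= Rabs c * (eps / (2 * (Rabs c + 1)))).
  { apply Rmult_le_compat_l. apply Rabs_pos. lra. }
  assert (eps / (2 * (Rabs c + 1)) + Rabs c * (eps / (2 * (Rabs c + 1))) = eps / 2).
  { field. generalize (Rabs_pos c); lra. }
  lra.
Qed.

Lemma is_int_zero : is_int_0_inf (fun _ => 0) 0.
Proof.
  intros eps Heps. exists 1, 0. split. lra. intros a b Ha Hb Hab.
  exists (RiemannInt_P14 a b 0).
  change (Rabs (RiemannInt (RiemannInt_P14 a b 0) - 0) < eps).
  rewrite RiemannInt_P15. rewrite Rmult_0_l, Rminus_0_r, Rabs_R0. auto.
Qed.

Lemma is_int_scal f l c : is_int_0_inf f l -> is_int_0_inf (fun s => c * f s) (c * l).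
Proof.
  intros H. replace (c * l) with (0 + c * l) by ring.
  apply is_int_ext with (fun s => 0 + c * f s). intros; ring.
  apply is_int_lin; auto. apply is_int_zero.
Qed.

Lemma is_int_add f g l1 l2 : is_int_0_inf f l1 -> is_int_0_inf g l2 ->
  is_int_0_inf (fun s => f s + g s) (l1 + l2).
Proof.
  intros. replace (l1 + l2) with (l1 + 1 * l2) by ring.
  apply is_int_ext with (fun s => f s + 1 * g s). intros; ring. apply is_int_lin; auto.
Qed.

Lemma conv_pos (f : R -> R) (L : R) :
  (forall a b, 0 < a -> a <= b -> Riemann_integrable f a b) ->
  (forall s, 0 < s -> 0 <= f s) ->
  (forall a b (pr : Riemann_integrable f a b), 0 < a -> a <= b -> RiemannInt pr <= L) ->
  exists l, is_int_0_inf f l /\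
    (forall a b (pr : Riemann_integrable f a b), 0 < a -> a <= b -> RiemannInt pr <= l).
Proof.
  intros HI HP HB.
  set (E := fun y => exists a b (pr : Riemann_integrable f a b), 0 < a /\ a <= b /\ y = RiemannInt pr).
  assert (Hbd : bound E). { exists L. intros y [a [b [pr [? [? ->]]]]]. apply HB; auto. }
  assert (Hne : exists y, E y). { exists (RiemannInt (HI 1 1 Rlt_0_1 (Rle_refl 1))). exists 1, 1, (HI 1 1 Rlt_0_1 (Rle_refl 1)). repeat split; lra. }
  destruct (completeness E Hbd Hne) as [m [Hub Hlub]].
  assert (Up : forall a b (pr : Riemann_integrable f a b), 0 < a -> a <= b -> RiemannInt pr <= m).
  { intros. apply Hub. exists a, b, pr; auto. }
  exists m. split; auto.
  intros eps Heps.
  assert (exists a1 b1 (pr1 : Riemann_integrable f a1 b1), 0 < a1 /\ a1 <= b1 /\ m - eps < RiemannInt pr1).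
  { apply NNPP; intro N.
    assert (m <= m - eps); [|lra]. apply Hlub. intros y [a [b [pr [? [? ->]]]]].
    apply Rnot_lt_le; intro. apply N. exists a, b, pr; auto. }
  destruct H as [a1 [b1 [pr1 [Ha1 [Hab1 Hm]]]]].
  exists a1, b1. split; auto. intros a b Ha Hb Hab.
  exists (HI a b (proj1 Ha) (Rlt_le _ _ Hab)).
  set (pr := HI a b (proj1 Ha) (Rlt_le _ _ Hab)).
  assert (pA : Riemann_integrable f a a1) by (apply HI; lra).
  assert (pB : Riemann_integrable f b1 b) by (apply HI; lra).
  assert (pC : Riemann_integrable f a b1) by (apply HI; lra).
  rewrite <- (RI_chasles f a b1 b pC pB pr).
  rewrite <- (RI_chasles f a a1 b1 pA pr1 pC).
  assert (0 <= RiemannInt pA) by (apply RI_nonneg; [lra|intros; apply HP; lra]).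
  assert (0 <= RiemannInt pB) by (apply RI_nonneg; [lra|intros; apply HP; lra]).
  assert (RiemannInt pA + RiemannInt pr1 + RiemannInt pB <= m).
  { rewrite (RI_chasles f a a1 b1 pA pr1 pC), (RI_chasles f a b1 b pC pB pr). apply Up; lra. }
  rewrite Rabs_left1; lra.
Qed.

Lemma between_abs x y c : Rmin x y <= c <= Rmax x y -> Rabs (c - x) <= Rabs (y - x).
Proof.
  intros [H1 H2]. unfold Rmin, Rmax in *. destruct (Rle_dec x y).
  - rewrite !Rabs_right; lra.
  - rewrite !Rabs_left1; lra.
Qed.

Lemma taylor_pt (F G H : R -> R -> R) p0 d (M : R -> R) p s :
  (forall p, Rabs (p - p0) < d -> derivable_pt_lim (fun q => F q s) p (G p s)) ->
  (forall p, Rabs (p - p0) < d -> derivable_pt_lim (fun q => G q s) p (H p s)) ->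
  (forall p, Rabs (p - p0) < d -> Rabs (H p s) <= M s) ->
  Rabs (p - p0) < d ->
  Rabs (F p s - F p0 s - (p - p0) * G p0 s) <= (p - p0)^2 * M s.
Proof.
  intros HF HG HH Hp.
  destruct (mvt_any (fun q => F q s - (q - p0) * G p0 s) (fun q => G q s - G p0 s) p0 p) as [c [Hc Ec]].
  { intros c Hc. replace (G c s - G p0 s) with (G c s - (1 - 0) * G p0 s) by ring.
    apply dminus. apply HF. generalize (between_abs _ _ _ Hc); lra.
    apply (dval _ _ ((1-0) * G p0 s + (c - p0) * 0)). ring.
    apply (dmul (fun y => y - p0) (fun _ => G p0 s)). apply dminus. apply did. apply dconst. apply dconst. }
  assert (Hcp : Rabs (c - p0) <= Rabs (p - p0)) by (apply between_abs; auto).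
  destruct (mvt_any (fun q => G q s) (fun q => H q s) p0 c) as [c' [Hc' Ec']].
  { intros c'' Hc''. apply HG. generalize (between_abs _ _ _ Hc''); lra. }
  assert (Hcp' : Rabs (c' - p0) <= Rabs (c - p0)) by (apply between_abs; auto).
  replace (F p s - F p0 s - (p - p0) * G p0 s) with (H c' s * (c - p0) * (p - p0)).
  2:{ replace (p0 - p0) with 0 in Ec by ring. rewrite Rmult_0_l, Rminus_0_r in Ec.
      rewrite <- Ec'. lra. }
  rewrite !Rabs_mult.
  assert (Rabs (H c' s) <= M s) by (apply HH; lra).
  assert (0 <= M s) by (eapply Rle_trans; [apply Rabs_pos|eauto]).
  replace ((p - p0)^2) with (Rabs (p - p0) * Rabs (p - p0)).
  2:{ rewrite <- Rabs_mult. rewrite Rabs_right. ring. apply Rle_ge. apply Rle_0_sqr. }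
  apply Rle_trans with (M s * Rabs (c - p0) * Rabs (p - p0)).
  apply Rmult_le_compat_r. apply Rabs_pos. apply Rmult_le_compat_r. apply Rabs_pos. auto.
  assert (0 <= Rabs (c - p0)) by apply Rabs_pos.
  assert (0 <= Rabs (p - p0)) by apply Rabs_pos.
  assert (M s * Rabs (c - p0) <= M s * Rabs (p - p0)) by (apply Rmult_le_compat_l; auto).
  nra.
Qed.

Lemma dui (F G H : R -> R -> R) (IF : R -> R) (p0 d L g0 : R) (M : R -> R) :
  0 < d ->
  (forall p s, Rabs (p - p0) < d -> 0 < s -> derivable_pt_lim (fun q => F q s) p (G p s)) ->
  (forall p s, Rabs (p - p0) < d -> 0 < s -> derivable_pt_lim (fun q => G q s) p (H p s)) ->
  (forall p s, Rabs (p - p0) < d -> 0 < s -> Rabs (H p s) <= M s) ->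
  (forall a b, 0 < a -> a <= b -> Riemann_integrable M a b) ->
  (forall a b (pr : Riemann_integrable M a b), 0 < a -> a <= b -> RiemannInt pr <= L) ->
  (forall p, Rabs (p - p0) < d -> is_int_0_inf (F p) (IF p)) ->
  is_int_0_inf (G p0) g0 ->
  derivable_pt_lim IF p0 g0.
Proof.
  intros Hd HF HG HH HMi HML HI HG0.
  assert (Step2 : forall p, Rabs (p - p0) < d ->
     Rabs (IF p - IF p0 - (p - p0) * g0) <= (p - p0)^2 * Rabs L).
  { intros p Hp. set (h := p - p0) in *.
    apply Rnot_lt_le. intro Hc.
    set (D := Rabs (IF p - IF p0 - h * g0) - h^2 * Rabs L).
    assert (HD : 0 < D) by (unfold D; lra).
    assert (Hh1 : 0 < 3 * (1 + Rabs h)) by (generalize (Rabs_pos h); lra).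
    set (eta := D / (3 * (1 + Rabs h))).
    assert (Heta : 0 < eta) by (apply Rdiv_lt_0_compat; auto).
    assert (Hp0 : Rabs (p0 - p0) < d) by (rewrite Rminus_diag, Rabs_R0; auto).
    destruct (HI p Hp eta Heta) as [a1 [b1 [Ha1 K1]]].
    destruct (HI p0 Hp0 eta Heta) as [a2 [b2 [Ha2 K2]]].
    destruct (HG0 eta Heta) as [a3 [b3 [Ha3 K3]]].
    set (a := Rmin a1 (Rmin a2 a3) / 2). set (b := Rmax b1 (Rmax b2 (Rmax b3 a)) + 1).
    assert (0 < Rmin a1 (Rmin a2 a3)) by (repeat apply Rmin_pos; auto).
    generalize (Rmin_l a1 (Rmin a2 a3)) (Rmin_r a1 (Rmin a2 a3)) (Rmin_l a2 a3) (Rmin_r a2 a3).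
    generalize (Rmax_l b1 (Rmax b2 (Rmax b3 a))) (Rmax_r b1 (Rmax b2 (Rmax b3 a))) (Rmax_l b2 (Rmax b3 a))
      (Rmax_r b2 (Rmax b3 a)) (Rmax_l b3 a) (Rmax_r b3 a). intros.
    assert (Had : a = Rmin a1 (Rmin a2 a3) / 2) by reflexivity.
    assert (Hbd : b = Rmax b1 (Rmax b2 (Rmax b3 a)) + 1) by reflexivity.
    clearbody a b.
    assert (Ha0 : 0 < a) by lra.
    destruct (K1 a b) as [p1 E1]; try lra.
    destruct (K2 a b) as [p2 E2]; try lra.
    destruct (K3 a b) as [p3 E3]; try lra.
    assert (Hab : a <= b) by lra.
    set (pX := RiemannInt_P10 (-h) (RiemannInt_P10 (-1) p1 p2) p3).
    assert (EX : RiemannInt pX = RiemannInt p1 - RiemannInt p2 - h * RiemannInt p3).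
    { unfold pX. rewrite (RI_lin _ _ a b (-h) (RiemannInt_P10 (-1) p1 p2) p3).
      rewrite (RI_lin _ _ a b (-1) p1 p2). ring. }
    assert (pM := HMi a b Ha0 Hab).
    assert (BX : Rabs (RiemannInt p1 - RiemannInt p2 - h * RiemannInt p3) <= h^2 * Rabs L).
    { rewrite <- EX. eapply Rle_trans. apply (RI_abs _ _ _ pX (RiemannInt_P16 pX) Hab).
      eapply Rle_trans. apply (RI_le _ (fun s => h^2 * M s) a b _ (Riemann_integrable_scal (h^2) pM) Hab).
      - intros s Hs. replace (F p s + -1 * F p0 s + - h * G p0 s) with (F p s - F p0 s - (p - p0) * G p0 s) by (unfold h; ring).
        apply (taylor_pt F G H p0 d M p s); auto.
        intros; apply HF; auto; lra. intros; apply HG; auto; lra. intros; apply HH; auto; lra.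
      - rewrite (RI_scal M a b (h^2) pM). apply Rmult_le_compat_l. nra.
        eapply Rle_trans. apply HML; auto. apply RRle_abs. }
    assert (Rabs (IF p - IF p0 - h * g0) <=
      Rabs (RiemannInt p1 - RiemannInt p2 - h * RiemannInt p3) + Rabs (RiemannInt p1 - IF p)
      + Rabs (RiemannInt p2 - IF p0) + Rabs h * Rabs (RiemannInt p3 - g0)).
    { rewrite <- Rabs_mult.
      replace (IF p - IF p0 - h * g0) with
        ((RiemannInt p1 - RiemannInt p2 - h * RiemannInt p3) - (RiemannInt p1 - IF p)
         + (RiemannInt p2 - IF p0) + h * (RiemannInt p3 - g0)) by ring.
      eapply Rle_trans; [apply Rabs_triang|]. apply Rplus_le_compat_r.
      eapply Rle_trans; [apply Rabs_triang|]. apply Rplus_le_compat_r.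
      eapply Rle_trans; [apply Rabs_triang|]. rewrite Rabs_Ropp. lra. }
    assert (Rabs h * Rabs (RiemannInt p3 - g0) <= Rabs h * eta).
    { apply Rmult_le_compat_l. apply Rabs_pos. lra. }
    assert (eta * (2 + Rabs h) <= D).
    { unfold eta. apply Rmult_le_reg_r with (3 * (1 + Rabs h)); auto.
      field_simplify; [|lra]. generalize (Rabs_pos h); intros. nra. }
    unfold D in *. nra. }
  intros eps Heps.
  assert (HL : 0 < Rabs L + 1) by (generalize (Rabs_pos L); lra).
  assert (Hd' : 0 < Rmin d (eps / (Rabs L + 1))) by (apply Rmin_pos; auto; apply Rdiv_lt_0_compat; auto).
  exists (mkposreal _ Hd'). intros h Hh0 Hh. simpl in Hh.
  generalize (Rmin_l d (eps / (Rabs L + 1))) (Rmin_r d (eps / (Rabs L + 1))); intros.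
  assert (S2 := Step2 (p0 + h) ltac:(replace (p0 + h - p0) with h by ring; lra)).
  replace (p0 + h - p0) with h in S2 by ring.
  replace ((IF (p0 + h) - IF p0) / h - g0) with ((IF (p0 + h) - IF p0 - h * g0) / h) by (field; auto).
  unfold Rdiv. rewrite Rabs_mult, Rabs_inv.
  assert (0 < Rabs h) by (apply Rabs_pos_lt; auto).
  apply Rmult_lt_reg_r with (Rabs h); auto. rewrite Rmult_assoc, Rinv_l, Rmult_1_r by lra.
  eapply Rle_lt_trans. apply S2.
  replace (h^2) with (Rabs h * Rabs h) by (rewrite <- Rabs_mult; rewrite Rabs_right; [ring|nra]).
  assert (Rabs h * (Rabs L + 1) < eps).
  { apply Rlt_le_trans with (eps / (Rabs L + 1) * (Rabs L + 1)).
    apply Rmult_lt_compat_r; lra. right; field; lra. }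
  generalize (Rabs_pos L); nra.
Qed.

Definition phi (g r t s : R) : R := Rpower s g * exp (- r / (2 * s)) * exp (- s / t).

Lemma Rpower_pos x y : 0 < Rpower x y.
Proof. unfold Rpower; apply exp_pos. Qed.

Lemma phi_pos g r t s : 0 < phi g r t s.
Proof. unfold phi. generalize (Rpower_pos s g) (exp_pos (- r / (2 * s))) (exp_pos (- s / t)); intros.
  apply Rmult_lt_0_compat; auto. apply Rmult_lt_0_compat; auto. Qed.

Lemma rp_m1 s g : 0 < s -> Rpower s (g - 1) = Rpower s g / s.
Proof.
  intros. unfold Rminus. rewrite Rpower_plus, Rpower_Ropp, Rpower_1; auto.
Qed.

Lemma phi_m1 g r t s : 0 < s -> phi (g - 1) r t s = phi g r t s / s.
Proof. intros. unfold phi. rewrite rp_m1 by auto. field. lra. Qed.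

Lemma phi_p1 g r t s : 0 < s -> phi (g + 1) r t s = phi g r t s * s.
Proof. intros. replace g with ((g + 1) - 1) at 2 by ring. rewrite phi_m1 by auto. field. lra. Qed.

Lemma phi_idx g g' r t s : g = g' -> phi g r t s = phi g' r t s.
Proof. intros; subst; auto. Qed.

Lemma d_r g r t s : 0 < s ->
  derivable_pt_lim (fun q => phi g q t s) r (- / 2 * phi (g - 1) r t s).
Proof.
  intros Hs.
  apply dext with (fun q => (Rpower s g * exp (- s / t)) * exp ((- / (2 * s)) * q)).
  { intros q. unfold phi. replace (- q / (2 * s)) with (- / (2 * s) * q) by (field; lra). ring. }
  eapply dval. 2:{ apply dscal. apply dexp. apply dscal. apply did. }
  rewrite phi_m1 by auto. unfold phi. replace (- / (2 * s) * r) with (- r / (2 * s)) by (field; lra).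
  field. lra.
Qed.

Lemma d_t g r t s : 0 < s -> 0 < t ->
  derivable_pt_lim (fun q => phi g r q s) t (/ (t * t) * phi (g + 1) r t s).
Proof.
  intros Hs Ht.
  apply dext with (fun q => (Rpower s g * exp (- r / (2 * s))) * exp ((- s) * / q)).
  { intros q. unfold phi. replace (- s / q) with (- s * / q) by (unfold Rdiv; ring). ring. }
  eapply dval. 2:{ apply dscal. apply dexp. apply dscal. apply dinv; auto. }
  rewrite phi_p1 by auto. unfold phi. unfold Rdiv. field. lra.
Qed.

Lemma d_s g r t s : 0 < s -> 0 < t ->
  derivable_pt_lim (phi g r t) s
    (g * phi (g - 1) r t s + r / 2 * phi (g - 1 - 1) r t s - / t * phi g r t s).
Proof.
  intros Hs Ht.
  apply dext with (fun q => (Rpower q g * exp ((- r / 2) * / q)) * exp ((- / t) * q)).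
  { intros q. unfold phi. replace (- r / (2 * q)) with (- r / 2 * / q) by (unfold Rdiv; rewrite Rinv_mult; ring).
    replace (- q / t) with (- / t * q) by (unfold Rdiv; ring). ring. }
  eapply dval. 2:{ apply dmul. apply dmul. apply derivable_pt_lim_power; auto.
    apply dexp. apply dscal. apply dinv; auto. apply dexp. apply dscal. apply did. }
  cbv beta. replace (- r / 2 * / s) with (- r / (2 * s)) by (unfold Rdiv; rewrite Rinv_mult; ring).
  replace (- / t * s) with (- s / t) by (unfold Rdiv; ring).
  rewrite !phi_m1 by auto. unfold phi. rewrite rp_m1 by auto. field. split; lra.
Qed.

Lemma cont_phi g r t s : 0 < s -> 0 < t -> continuity_pt (phi g r t) s.
Proof. intros. apply derivable_continuous_pt. exists (g * phi (g - 1) r t s + r / 2 * phi (g - 1 - 1) r t s - / t * phi g r t s). apply d_s; auto. Qed.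

Lemma int_phi g r t a b : 0 < t -> 0 < a -> a <= b -> Riemann_integrable (phi g r t) a b.
Proof. intros. apply continuity_implies_RiemannInt; auto. intros; apply cont_phi; lra. Qed.

Lemma exp_pow_N x N : exp x ^ N = exp (INR N * x).
Proof.
  induction N. simpl. rewrite Rmult_0_l, exp_0; auto.
  rewrite S_INR. simpl pow. rewrite IHN, <- exp_plus. f_equal; ring.
Qed.

Lemma exp_le1 x : x <= 0 -> exp x <= 1.
Proof. intros. rewrite <- exp_0. destruct H. left; apply exp_increasing; auto. subst; lra. Qed.

Lemma boundX g k : 0 < k -> exists C, forall u, 1 <= u -> Rpower u g * exp (- (k * u)) <= C.
Proof.
  intros Hk.
  set (N := S (Z.abs_nat (up g))).
  assert (HN : g <= INR N).
  { destruct (archimed g) as [H1 _]. unfold N. rewrite S_INR, INR_IZR_INZ.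
    rewrite Zabs2Nat.id_abs. assert (IZR (up g) <= IZR (Z.abs (up g))) by (apply IZR_le; lia).
    lra. }
  assert (HN1 : 0 < INR N) by (unfold N; rewrite S_INR; generalize (pos_INR (Z.abs_nat (up g))); lra).
  exists (/ ((k / INR N) ^ N)). intros u Hu.
  assert (Hkn : 0 < k / INR N) by (apply Rdiv_lt_0_compat; auto).
  assert (Hp : 0 < (k / INR N) ^ N) by (apply pow_lt; auto).
  assert (E1 : Rpower u g <= u ^ N).
  { rewrite <- Rpower_pow by lra. apply Rle_Rpower; auto. }
  assert (E2 : (k / INR N) ^ N * u ^ N <= exp (k * u)).
  { rewrite <- Rpow_mult_distr.
    replace (exp (k * u)) with (exp (k * u / INR N) ^ N).
    2:{ rewrite exp_pow_N. f_equal. field. lra. }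
    apply pow_incr. split. apply Rmult_le_pos; lra.
    generalize (exp_ineq1_le (k * u / INR N)). replace (k / INR N * u) with (k * u / INR N) by (field; lra). lra. }
  assert (0 < exp (- (k * u))) by apply exp_pos.
  apply Rle_trans with (u ^ N * exp (- (k * u))).
  apply Rmult_le_compat_r; lra.
  rewrite exp_Ropp. apply Rmult_le_reg_l with ((k / INR N) ^ N); auto.
  rewrite Rinv_r by lra. apply Rmult_le_reg_r with (exp (k * u)). apply exp_pos.
  rewrite Rmult_1_l. rewrite <- Rmult_assoc. rewrite Rmult_assoc, Rinv_l, Rmult_1_r by (apply Rgt_not_eq, exp_pos). lra.
Qed.

Lemma rpower_inv u g : 0 < u -> Rpower (/ u) g = Rpower u (- g).
Proof. intros. unfold Rpower. rewrite ln_Rinv by auto. f_equal; ring. Qed.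

Lemma bnd0 g r t : 0 < r -> 0 < t -> exists C, forall s, 0 < s <= 1 ->
  phi g r t s <= C * exp (- (r / 4) * / s).
Proof.
  intros Hr Ht. destruct (boundX (- g) (r / 4)) as [C HC]. lra.
  exists C. intros s [Hs1 Hs2].
  set (u := / s). assert (Hu : 1 <= u).
  { unfold u. rewrite <- Rinv_1. apply Rinv_le_contravar; lra. }
  assert (Hsu : s = / u) by (unfold u; rewrite Rinv_inv; auto).
  assert (HC' := HC u Hu).
  unfold phi. 
  replace (exp (- r / (2 * s))) with (exp (- (r / 4 * u)) * exp (- (r / 4) * / s)).
  2:{ rewrite <- exp_plus. f_equal. unfold u. field. lra. }
  rewrite Hsu at 1. rewrite rpower_inv by lra.
  assert (0 < exp (- (r / 4) * / s)) by apply exp_pos.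
  assert (exp (- s / t) <= 1) by (apply exp_le1; unfold Rdiv; assert (0 < / t) by (apply Rinv_0_lt_compat; auto); nra).
  assert (0 < exp (- s / t)) by apply exp_pos.
  assert (0 < Rpower u (- g) * exp (- (r / 4 * u))) by (apply Rmult_lt_0_compat; [apply Rpower_pos|apply exp_pos]).
  rewrite <- Rmult_assoc. change (/ s) with u. assert (0 < exp (- (r / 4) * u)) by apply exp_pos.
  apply Rle_trans with (Rpower u (- g) * exp (- (r / 4 * u)) * exp (- (r / 4) * u) * 1).
  apply Rmult_le_compat_l. apply Rmult_le_pos; lra. lra.
  rewrite Rmult_1_r. apply Rmult_le_compat_r; lra.
Qed.

Lemma bndinf g r t : 0 <= r -> 0 < t -> exists C, forall s, 1 <= s ->
  phi g r t s <= C * exp (- (/ (2 * t) * s)).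
Proof.
  intros Hr Ht. destruct (boundX g (/ (2 * t))) as [C HC].
  apply Rinv_0_lt_compat; lra.
  exists C. intros s Hs. assert (HC' := HC s Hs).
  unfold phi.
  replace (exp (- s / t)) with (exp (- (/ (2 * t) * s)) * exp (- (/ (2 * t) * s))).
  2:{ rewrite <- exp_plus. f_equal. field. lra. }
  assert (exp (- r / (2 * s)) <= 1).
  { apply exp_le1. unfold Rdiv. assert (0 < / (2 * s)) by (apply Rinv_0_lt_compat; lra). nra. }
  assert (0 < exp (- r / (2 * s))) by apply exp_pos.
  generalize (exp_pos (- (/ (2 * t) * s))) (Rpower_pos s g); intros.
  apply Rle_trans with (Rpower s g * 1 * (exp (- (/ (2 * t) * s)) * exp (- (/ (2 * t) * s)))).
  apply Rmult_le_compat_r. nra. apply Rmult_le_compat_l; lra.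
  rewrite Rmult_1_r, <- Rmult_assoc. apply Rmult_le_compat_r; lra.
Qed.

Lemma cont_of_d f x : derivable_pt f x -> continuity_pt f x.
Proof. apply derivable_continuous_pt. Qed.

Lemma phi_int_bound g r t : 0 < r -> 0 < t -> exists L, forall a b (pr : Riemann_integrable (phi g r t) a b),
  0 < a -> a <= b -> RiemannInt pr <= L.
Proof.
  intros Hr Ht.
  destruct (bnd0 (g + 1 + 1) r t Hr Ht) as [C1 HC1].
  destruct (bndinf g r t (Rlt_le _ _ Hr) Ht) as [C2 HC2].
  assert (P1 : 0 < C1).
  { assert (H := HC1 1 ltac:(lra)). generalize (phi_pos (g+1+1) r t 1) (exp_pos (- (r / 4) * / 1)); intros.
    apply Rnot_le_lt; intro. assert (C1 * exp (- (r / 4) * / 1) <= 0) by nra. lra. }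
  assert (P2 : 0 < C2).
  { assert (H := HC2 1 ltac:(lra)). generalize (phi_pos g r t 1) (exp_pos (- (/ (2 * t) * 1))); intros.
    apply Rnot_le_lt; intro. assert (C2 * exp (- (/ (2 * t) * 1)) <= 0) by nra. lra. }
  set (k := r / 4). set (l := / (2 * t)).
  assert (Hk : 0 < k) by (unfold k; lra). assert (Hl : 0 < l) by (unfold l; apply Rinv_0_lt_compat; lra).
  set (M := fun s => C1 * (exp (- k * / s) * / s * / s) + C2 * exp (- l * s)).
  set (P := fun s => C1 / k * exp (- k * / s) - C2 / l * exp (- l * s)).
  assert (DP : forall s, 0 < s -> derivable_pt_lim P s (M s)).
  { intros s Hs. unfold P, M. eapply dval. 2:{ apply dminus. apply dscal. apply dexp. apply dscal. apply dinv; auto.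
      apply dscal. apply dexp. apply dscal. apply did. }
    cbv beta. field. lra. }
  assert (CM : forall s, 0 < s -> continuity_pt M s).
  { intros s Hs. apply cont_of_d. eexists. unfold M. apply dplus. apply dscal. apply dmul. apply dmul.
    apply dexp. apply dscal. apply dinv; auto. apply dinv; auto. apply dinv; auto.
    apply dscal. apply dexp. apply dscal. apply did. }
  assert (Mge : forall s, 0 < s -> phi g r t s <= M s).
  { intros s Hs. unfold M. generalize (exp_pos (- k * / s)) (exp_pos (- l * s)); intros.
    assert (0 < / s) by (apply Rinv_0_lt_compat; auto).
    destruct (Rle_dec s 1).
    - assert (Hq1 := HC1 s ltac:(lra)). rewrite !phi_p1 in Hq1 by auto.
      assert (phi g r t s <= C1 * (exp (- k * / s) * / s * / s)).
      { unfold k. replace (C1 * (exp (- (r / 4) * / s) * / s * / s)) with ((C1 * exp (- (r / 4) * / s)) * / s * / s) by ring.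
        apply Rmult_le_reg_r with s; auto. apply Rmult_le_reg_r with s; auto.
        replace (C1 * exp (- (r / 4) * / s) * / s * / s * s * s) with (C1 * exp (- (r / 4) * / s)) by (field; lra). lra. }
      assert (0 <= C2 * exp (- l * s)) by (apply Rmult_le_pos; lra). lra.
    - assert (Hq2 := HC2 s ltac:(lra)).
      assert (0 <= C1 * (exp (- k * / s) * / s * / s)) by (apply Rmult_le_pos; [lra|]; apply Rmult_le_pos; [|lra]; apply Rmult_le_pos; lra).
      unfold l. replace (- / (2 * t) * s) with (- (/ (2 * t) * s)) by ring. lra. }
  exists (C1 / k + C2 / l). intros a b pr Ha Hab.
  assert (prM : Riemann_integrable M a b) by (apply continuity_implies_RiemannInt; auto; intros; apply CM; lra).
  apply Rle_trans with (RiemannInt prM).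
  apply RI_le; auto. intros; apply Mge; lra.
  rewrite (ftc P M a b prM Hab). 2:{ intros; apply DP; lra. } 2:{ intros; apply CM; lra. }
  unfold P. assert (exp (- k * / b) <= 1) by (apply exp_le1; assert (0 < / b) by (apply Rinv_0_lt_compat; lra); nra).
  assert (exp (- l * b) > 0) by apply exp_pos. assert (exp (- k * / a) > 0) by apply exp_pos.
  assert (exp (- l * a) <= 1) by (apply exp_le1; nra).
  assert (0 < C1 / k) by (apply Rdiv_lt_0_compat; auto). assert (0 < C2 / l) by (apply Rdiv_lt_0_compat; auto).
  nra.
Qed.

Definition Psi (g r t : R) : R := int_0_inf (phi g r t).

Lemma Psi_spec g r t : 0 < r -> 0 < t ->
  is_int_0_inf (phi g r t) (Psi g r t) /\
  (forall a b (pr : Riemann_integrable (phi g r t) a b), 0 < a -> a <= b -> RiemannInt pr <= Psi g r t).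
Proof.
  intros Hr Ht. destruct (phi_int_bound g r t Hr Ht) as [L HL].
  destruct (conv_pos (phi g r t) L) as [l [H1 H2]].
  - intros; apply int_phi; auto.
  - intros; left; apply phi_pos.
  - auto.
  - unfold Psi. rewrite (int_0_inf_eq _ _ H1). auto.
Qed.

Lemma Ri_lin2 f g c1 c2 a b : Riemann_integrable f a b -> Riemann_integrable g a b ->
  Riemann_integrable (fun s => c1 * f s + c2 * g s) a b.
Proof.
  intros p1 p2. apply (Riemann_integrable_ext (f := fun x => (fun s => c1 * f s) x + c2 * g x)).
  intros; reflexivity. apply RiemannInt_P10; auto. apply Riemann_integrable_scal; auto.
Qed.

Lemma RI_lin2 f g c1 c2 a b (pr : Riemann_integrable (fun s => c1 * f s + c2 * g s) a b)
  (p1 : Riemann_integrable f a b) (p2 : Riemann_integrable g a b) :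
  RiemannInt pr = c1 * RiemannInt p1 + c2 * RiemannInt p2.
Proof.
  set (p1' := Riemann_integrable_scal c1 p1).
  set (p3 := RiemannInt_P10 c2 p1' p2).
  rewrite <- (RI_scal f a b c1 p1 p1'). rewrite <- (RI_lin _ _ a b c2 p1' p2 p3).
  apply RiemannInt_P5.
Qed.

Lemma phi_mono_r g r1 r2 t s : 0 < s -> r1 <= r2 -> phi g r2 t s <= phi g r1 t s.
Proof.
  intros. unfold phi. apply Rmult_le_compat_r. left; apply exp_pos.
  apply Rmult_le_compat_l. left; apply Rpower_pos.
  destruct (Req_dec r1 r2). subst; lra. left. apply exp_increasing.
  unfold Rdiv. assert (0 < / (2 * s)) by (apply Rinv_0_lt_compat; lra). nra.
Qed.

Lemma phi_mono_t g r t1 t2 s : 0 < s -> 0 < t1 -> t1 <= t2 -> phi g r t1 s <= phi g r t2 s.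
Proof.
  intros. unfold phi. apply Rmult_le_compat_l. apply Rmult_le_pos; left; [apply Rpower_pos|apply exp_pos].
  destruct (Req_dec t1 t2). subst; lra. left. apply exp_increasing.
  unfold Rdiv. apply Ropp_lt_cancel. rewrite !Ropp_mult_distr_l, !Ropp_involutive.
  apply Rmult_lt_compat_l; auto. apply Rinv_lt_contravar; nra.
Qed.

Lemma Psi_dr g r t : 0 < r -> 0 < t ->
  derivable_pt_lim (fun q => Psi g q t) r (- / 2 * Psi (g - 1) r t).
Proof.
  intros Hr Ht.
  assert (Hr2 : 0 < r / 2) by lra.
  apply (dui (fun p s => phi g p t s) (fun p s => - / 2 * phi (g - 1) p t s)
           (fun p s => - / 2 * (- / 2 * phi (g - 1 - 1) p t s)) (fun q => Psi g q t) r (r / 2)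
           (/ 4 * Psi (g - 1 - 1) (r / 2) t) (- / 2 * Psi (g - 1) r t)
           (fun s => / 4 * phi (g - 1 - 1) (r / 2) t s)); auto.
  - intros. apply d_r; auto.
  - intros. apply dscal. apply d_r; auto.
  - intros p s Hp Hs. rewrite Rabs_right.
    2:{ generalize (phi_pos (g - 1 - 1) p t s); lra. }
    replace (- / 2 * (- / 2 * phi (g - 1 - 1) p t s)) with (/ 4 * phi (g - 1 - 1) p t s) by field.
    apply Rmult_le_compat_l. lra. apply phi_mono_r; auto. apply Rabs_def2 in Hp. lra.
  - intros. apply Riemann_integrable_scal. apply int_phi; auto.
  - intros a b pr Ha Hab. rewrite (RI_scal _ a b (/ 4) (int_phi (g-1-1) (r/2) t a b Ht Ha Hab) pr).
    apply Rmult_le_compat_l. lra. apply Psi_spec; auto.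
  - intros p Hp. apply Rabs_def2 in Hp. apply Psi_spec; lra.
  - apply is_int_scal. apply Psi_spec; auto.
Qed.

Lemma Psi_dt g r t : 0 < r -> 0 < t ->
  derivable_pt_lim (fun q => Psi g r q) t (/ t * / t * Psi (g + 1) r t).
Proof.
  intros Hr Ht.
  set (T := 3 * t / 2). set (c1 := 2 * (2 / t) ^ 3). set (c2 := (2 / t) ^ 4).
  assert (HT : 0 < T) by (unfold T; lra).
  apply (dui (fun p s => phi g r p s) (fun p s => / p * / p * phi (g + 1) r p s)
           (fun p s => (- / (p * p) * / p + / p * - / (p * p)) * phi (g + 1) r p s
                       + / p * / p * (/ p * / p * phi (g + 1 + 1) r p s))
           (fun q => Psi g r q) t (t / 2)
           (c1 * Psi (g + 1) r T + c2 * Psi (g + 1 + 1) r T) (/ t * / t * Psi (g + 1) r t)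
           (fun s => c1 * phi (g + 1) r T s + c2 * phi (g + 1 + 1) r T s)); try lra.
  - intros p s Hp Hs. apply Rabs_def2 in Hp.
    eapply dval; [|apply d_t; lra]. rewrite Rinv_mult. ring.
  - intros p s Hp Hs. apply Rabs_def2 in Hp.
    apply (dmul (fun q => / q * / q) (fun q => phi (g + 1) r q s)). apply (dmul (fun q => / q) (fun q => / q)). apply dinv; lra. apply dinv; lra.
    eapply dval; [|apply d_t; lra]. rewrite Rinv_mult. ring.
  - intros p s Hp Hs. apply Rabs_def2 in Hp.
    assert (Hp0 : 0 < p) by lra.
    replace ((- / (p * p) * / p + / p * - / (p * p)) * phi (g + 1) r p s
       + / p * / p * (/ p * / p * phi (g + 1 + 1) r p s))
      with (- (2 * (/ p) ^ 3 * phi (g + 1) r p s) + (/ p) ^ 4 * phi (g + 1 + 1) r p s)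
      by (rewrite Rinv_mult; ring).
    set (w := / p). assert (Hw : 0 < w) by (apply Rinv_0_lt_compat; lra).
    assert (Hw2 : w <= 2 / t).
    { unfold w. unfold Rdiv. rewrite <- (Rinv_inv 2). rewrite <- Rinv_mult.
      apply Rinv_le_contravar; lra. }
    eapply Rle_trans; [apply Rabs_triang|]. rewrite Rabs_Ropp.
    generalize (phi_pos (g + 1) r p s) (phi_pos (g + 1 + 1) r p s); intros.
    assert (0 <= w ^ 3) by (apply pow_le; lra). assert (0 <= w ^ 4) by (apply pow_le; lra).
    rewrite (Rabs_right (2 * w ^ 3 * phi (g + 1) r p s)) by (apply Rle_ge; apply Rmult_le_pos; [apply Rmult_le_pos|]; lra).
    rewrite (Rabs_right (w ^ 4 * phi (g + 1 + 1) r p s)) by (apply Rle_ge; apply Rmult_le_pos; lra).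
    assert (E1 : phi (g + 1) r p s <= phi (g + 1) r T s) by (apply phi_mono_t; unfold T; lra).
    assert (E2 : phi (g + 1 + 1) r p s <= phi (g + 1 + 1) r T s) by (apply phi_mono_t; unfold T; lra).
    assert (W3 : w ^ 3 <= (2 / t) ^ 3) by (apply pow_incr; lra).
    assert (W4 : w ^ 4 <= (2 / t) ^ 4) by (apply pow_incr; lra).
    assert (0 <= w ^ 3) by (apply pow_le; lra). assert (0 <= w ^ 4) by (apply pow_le; lra).
    unfold c1, c2. apply Rplus_le_compat.
    + rewrite !Rmult_assoc. apply Rmult_le_compat_l. lra. apply Rmult_le_compat; lra.
    + apply Rmult_le_compat; lra.
  - intros. apply Ri_lin2; apply int_phi; auto.
  - intros a b pr Ha Hab.
    rewrite (RI_lin2 _ _ c1 c2 a b pr (int_phi (g+1) r T a b HT Ha Hab) (int_phi (g+1+1) r T a b HT Ha Hab)).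
    assert (0 <= c1) by (unfold c1; apply Rmult_le_pos; [lra|apply pow_le; unfold Rdiv; apply Rmult_le_pos; [lra|left; apply Rinv_0_lt_compat; lra]]).
    assert (0 <= c2) by (unfold c2; apply pow_le; unfold Rdiv; apply Rmult_le_pos; [lra|left; apply Rinv_0_lt_compat; lra]).
    apply Rplus_le_compat; apply Rmult_le_compat_l; auto; apply Psi_spec; auto.
  - intros p Hp. apply Rabs_def2 in Hp. apply Psi_spec; lra.
  - apply is_int_scal. apply Psi_spec; auto.
Qed.

Lemma exp_neg_le y : 0 < y -> exp (- y) <= / y.
Proof.
  intros. rewrite exp_Ropp. apply Rinv_le_contravar; auto.
  generalize (exp_ineq1_le y); lra.
Qed.

Lemma phi_lim0 g r t : 0 < r -> 0 < t -> forall eps, 0 < eps ->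
  exists a0, 0 < a0 /\ forall a, 0 < a < a0 -> phi g r t a < eps.
Proof.
  intros Hr Ht eps Heps. destruct (bnd0 g r t Hr Ht) as [C HC].
  set (C' := Rabs C + 1). assert (HC' : 0 < C') by (unfold C'; generalize (Rabs_pos C); lra).
  exists (Rmin 1 (eps * r / (8 * C'))). split.
  { apply Rmin_pos. lra. apply Rdiv_lt_0_compat; nra. }
  intros a [Ha1 Ha2]. generalize (Rmin_l 1 (eps * r / (8 * C'))) (Rmin_r 1 (eps * r / (8 * C'))); intros.
  assert (H1 := HC a ltac:(lra)).
  assert (Ey : exp (- (r / 4) * / a) <= / (r / 4 * / a)).
  { replace (- (r / 4) * / a) with (- (r / 4 * / a)) by ring. apply exp_neg_le.
    apply Rmult_lt_0_compat; [lra|apply Rinv_0_lt_compat; lra]. }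
  replace (/ (r / 4 * / a)) with (4 * a / r) in Ey by (field; lra).
  assert (C <= C') by (unfold C'; generalize (RRle_abs C); lra).
  assert (0 < exp (- (r / 4) * / a)) by apply exp_pos.
  apply Rle_lt_trans with (C' * (4 * a / r)).
  { apply Rle_trans with (C * exp (- (r / 4) * / a)); auto.
    apply Rle_trans with (C' * exp (- (r / 4) * / a)). apply Rmult_le_compat_r; lra.
    apply Rmult_le_compat_l; lra. }
  apply Rlt_le_trans with (C' * (4 * (eps * r / (8 * C')) / r)).
  { apply Rmult_lt_compat_l; auto. unfold Rdiv. apply Rmult_lt_compat_r. apply Rinv_0_lt_compat; lra. lra. }
  assert (C' * (4 * (eps * r / (8 * C')) / r) = eps / 2) by (field; lra). lra.
Qed.

Lemma phi_liminf g r t : 0 < r -> 0 < t -> forall eps, 0 < eps ->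
  exists b0, 0 < b0 /\ forall b, b0 < b -> phi g r t b < eps.
Proof.
  intros Hr Ht eps Heps. destruct (bndinf g r t (Rlt_le _ _ Hr) Ht) as [C HC].
  set (C' := Rabs C + 1). assert (HC' : 0 < C') by (unfold C'; generalize (Rabs_pos C); lra).
  set (l := / (2 * t)). assert (Hl : 0 < l) by (unfold l; apply Rinv_0_lt_compat; lra).
  exists (Rmax 1 (2 * C' / (l * eps))). split.
  { apply Rlt_le_trans with 1. lra. apply Rmax_l. }
  intros b Hb. generalize (Rmax_l 1 (2 * C' / (l * eps))) (Rmax_r 1 (2 * C' / (l * eps))); intros.
  assert (H1 := HC b ltac:(lra)). fold l in H1.
  assert (Ey : exp (- (l * b)) <= / (l * b)) by (apply exp_neg_le; nra).
  assert (C <= C') by (unfold C'; generalize (RRle_abs C); lra).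
  assert (0 < exp (- (l * b))) by apply exp_pos.
  apply Rle_lt_trans with (C' * / (l * b)).
  { apply Rle_trans with (C * exp (- (l * b))); auto.
    apply Rle_trans with (C' * exp (- (l * b))). apply Rmult_le_compat_r; lra.
    apply Rmult_le_compat_l; lra. }
  assert (2 * C' / (l * eps) < b) by lra.
  apply Rmult_lt_reg_r with (l * b). nra. rewrite Rmult_assoc, Rinv_l, Rmult_1_r by nra.
  assert (2 * C' < b * (l * eps)).
  { apply Rmult_lt_reg_r with (/ (l * eps)). apply Rinv_0_lt_compat; nra.
    replace (b * (l * eps) * / (l * eps)) with b by (field; nra). lra. }
  nra.
Qed.

Lemma Psi_rec g r t : 0 < r -> 0 < t ->
  (g + 1) * Psi g r t + r / 2 * Psi (g - 1) r t = / t * Psi (g + 1) r t.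
Proof.
  intros Hr Ht.
  set (Q := fun s => ((g + 1) * phi (g + 1 - 1) r t s + r / 2 * phi (g + 1 - 1 - 1) r t s)
                      + (- / t) * phi (g + 1) r t s).
  assert (H1 : is_int_0_inf Q (((g + 1) * Psi (g + 1 - 1) r t + r / 2 * Psi (g + 1 - 1 - 1) r t)
                               + (- / t) * Psi (g + 1) r t)).
  { unfold Q. apply is_int_lin. 2:apply Psi_spec; auto.
    apply (is_int_ext (fun s => (g + 1) * phi (g + 1 - 1) r t s + r / 2 * phi (g + 1 - 1 - 1) r t s)).
    auto. apply is_int_add; apply is_int_scal; apply Psi_spec; auto. }
  assert (H2 : is_int_0_inf Q 0).
  { intros eps Heps. assert (He2 : 0 < eps / 2) by lra.
    destruct (phi_lim0 (g + 1) r t Hr Ht _ He2) as [a0 [Ha0 K0]].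
    destruct (phi_liminf (g + 1) r t Hr Ht _ He2) as [b0 [Hb0 Kb]].
    exists a0, b0. split; auto. intros a b Ha Hb Hab.
    assert (pr : Riemann_integrable Q a b).
    { unfold Q. apply (Riemann_integrable_ext (f := fun x => (fun s => (g + 1) * phi (g + 1 - 1) r t s + r / 2 * phi (g + 1 - 1 - 1) r t s) x + (- / t) * phi (g + 1) r t x)).
      intros; reflexivity. apply RiemannInt_P10. apply Ri_lin2; apply int_phi; lra. apply int_phi; lra. }
    exists pr. rewrite (ftc (phi (g + 1) r t) Q a b pr); try lra.
    - generalize (K0 a Ha) (Kb b Hb) (phi_pos (g + 1) r t a) (phi_pos (g + 1) r t b); intros.
      rewrite Rminus_0_r. apply Rabs_def1; lra.
    - intros x Hx. eapply dval; [|apply d_s; lra]. unfold Q. ring.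
    - intros x Hx. apply cont_of_d. eexists. unfold Q.
      apply dplus. apply dplus. apply dscal. apply d_s; lra. apply dscal. apply d_s; lra.
      apply dscal. apply d_s; lra. }
  assert (E := is_int_unique _ _ _ H1 H2).
  replace (g + 1 - 1) with g in E by ring.
  lra.
Qed.

Definition rr (n : nat) (y : nat -> R) : R := fsum n (fun i => y i ^ 2).

Lemma fsum_ext n f g : (forall i, (i < n)%nat -> f i = g i) -> fsum n f = fsum n g.
Proof.
  induction n; simpl; intros; auto. rewrite IHn, H; auto.
Qed.

Lemma fsum_lin n f g a b : fsum n (fun i => a * f i + b * g i) = a * fsum n f + b * fsum n g.
Proof. induction n; simpl. ring. rewrite IHn. ring. Qed.

Lemma fsum_const n c : fsum n (fun _ => c) = INR n * c.
Proof. induction n; cbn [fsum]. simpl; ring. rewrite IHn, S_INR. ring. Qed.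

Lemma rr_nonneg n y : 0 <= rr n y.
Proof. unfold rr. induction n; cbn [fsum]. lra. generalize (pow2_ge_0 (y n)); lra. Qed.

Lemma rr_upd_out n y i h : (n <= i)%nat -> rr n (upd y i h) = rr n y.
Proof.
  unfold rr. induction n; cbn [fsum]; intros; auto. rewrite IHn by lia. unfold upd.
  destruct (Nat.eq_dec n i); [lia|auto].
Qed.

Lemma rr_upd n y i h : (i < n)%nat -> rr n (upd y i h) = (rr n y - y i ^ 2) + h ^ 2.
Proof.
  induction n; intros; [lia|].
  destruct (Nat.eq_dec i n).
  - subst. unfold rr in *. cbn [fsum]. fold (rr n (upd y n h)) (rr n y).
    rewrite rr_upd_out by lia. unfold upd. destruct (Nat.eq_dec n n); [|lia]. ring.
  - unfold rr in *. cbn [fsum]. rewrite IHn by lia. unfold upd. destruct (Nat.eq_dec n i); [lia|]. ring.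
Qed.

Lemma upd_same y i : upd y i (y i) = y.
Proof. extensionality j. unfold upd. destruct (Nat.eq_dec j i); subst; auto. Qed.

Lemma upd_eq y i h : upd y i h i = h.
Proof. unfold upd. destruct (Nat.eq_dec i i); auto; lia. Qed.

Lemma upd_neq y i j h : j <> i -> upd y i h j = y j.
Proof. intros. unfold upd. destruct (Nat.eq_dec j i); auto; lia. Qed.

Lemma rr_ge n y i : (i < n)%nat -> y i ^ 2 <= rr n y.
Proof.
  intros. generalize (rr_upd n y i 0 H) (rr_nonneg n (upd y i 0)). intros E P. rewrite E in P.
  replace (0 ^ 2) with 0 in P by ring. lra.
Qed.

Lemma nonzero_rr n y : nonzero_vec n y -> 0 < rr n y.
Proof.
  intros [i [Hi Hy]]. apply Rlt_le_trans with (y i ^ 2). apply pow2_gt_0 in Hy || idtac.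
  assert (0 < y i ^ 2) by (simpl; rewrite Rmult_1_r; apply Rsqr_pos_lt; auto). auto.
  apply rr_ge; auto.
Qed.

Lemma nbhd n y i : (i < n)%nat -> 0 < rr n y ->
  exists d, 0 < d /\ forall h, Rabs (h - y i) < d -> 0 < rr n (upd y i h).
Proof.
  intros Hi Hr. assert (Hc : 0 <= rr n y - y i ^ 2) by (generalize (rr_ge n y i Hi); lra).
  destruct (Req_dec (y i) 0) as [E|E].
  - exists 1. split. lra. intros. rewrite rr_upd by auto. rewrite E in *.
    replace (0 ^ 2) with 0 in * by ring. generalize (pow2_ge_0 h); lra.
  - exists (Rabs (y i)). split. apply Rabs_pos_lt; auto. intros h Hh.
    rewrite rr_upd by auto. assert (h <> 0).
    { intro; subst. rewrite Rminus_0_l, Rabs_Ropp in Hh. lra. }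
    assert (0 < h ^ 2) by (simpl; rewrite Rmult_1_r; apply Rsqr_pos_lt; auto). lra.
Qed.

Lemma pderiv_eq f i y l : partial_lim f i y l -> pderiv i f y = l.
Proof.
  intros H. unfold pderiv.
  assert (H' : partial_lim f i y (epsilon (inhabits 0) (partial_lim f i y))).
  { apply epsilon_spec. exists l; auto. }
  unfold partial_lim in *. eapply uniqueness_limite; eauto.
Qed.

Lemma dsq x : derivable_pt_lim (fun h => h ^ 2) x (2 * x).
Proof. eapply dval; [|apply derivable_pt_lim_pow]. simpl. ring. Qed.

Lemma GR n (g : (nat -> R) -> R) (Rf : R -> R) Rd y i : (i < n)%nat -> 0 < rr n y ->
  (forall z, 0 < rr n z -> g z = Rf (rr n z)) ->
  derivable_pt_lim Rf (rr n y) Rd -> partial_lim g i y (2 * y i * Rd).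
Proof.
  intros Hi Hr Hg HR. unfold partial_lim.
  destruct (nbhd n y i Hi Hr) as [d [Hd Hn]].
  apply (dlocal (fun h => Rf ((rr n y - y i ^ 2) + h ^ 2)) _ _ _ d Hd).
  { intros z Hz. rewrite Hg by auto. rewrite rr_upd; auto. }
  eapply dval; [|apply (dcomp (fun h => (rr n y - y i ^ 2) + h ^ 2) Rf _ (0 + 2 * y i) Rd)].
  2:{ apply dplus; [apply dconst|apply dsq]. }
  ring. replace (rr n y - y i ^ 2 + y i ^ 2) with (rr n y) by ring. auto.
Qed.

Lemma GL_same n (g : (nat -> R) -> R) (Rf : R -> R) Rd y i : (i < n)%nat -> 0 < rr n y ->
  (forall z, 0 < rr n z -> g z = z i * Rf (rr n z)) ->
  derivable_pt_lim Rf (rr n y) Rd -> partial_lim g i y (Rf (rr n y) + 2 * y i ^ 2 * Rd).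
Proof.
  intros Hi Hr Hg HR. unfold partial_lim.
  destruct (nbhd n y i Hi Hr) as [d [Hd Hn]].
  apply (dlocal (fun h => h * Rf ((rr n y - y i ^ 2) + h ^ 2)) _ _ _ d Hd).
  { intros z Hz. rewrite Hg by auto. rewrite rr_upd, upd_eq; auto. }
  eapply dval; [|apply dmul; [apply did|apply (dcomp (fun h => (rr n y - y i ^ 2) + h ^ 2) Rf _ (0 + 2 * y i) Rd)]].
  2:{ apply dplus; [apply dconst|apply dsq]. }
  cbv beta. replace (rr n y - y i ^ 2 + y i ^ 2) with (rr n y) by ring. ring.
  replace (rr n y - y i ^ 2 + y i ^ 2) with (rr n y) by ring. auto.
Qed.

Lemma GL_other n (g : (nat -> R) -> R) (Rf : R -> R) Rd y i j : (j < n)%nat -> j <> i -> 0 < rr n y ->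
  (forall z, 0 < rr n z -> g z = z i * Rf (rr n z)) ->
  derivable_pt_lim Rf (rr n y) Rd -> partial_lim g j y (y i * (2 * y j * Rd)).
Proof.
  intros Hj Hij Hr Hg HR. unfold partial_lim.
  destruct (nbhd n y j Hj Hr) as [d [Hd Hn]].
  apply (dlocal (fun h => y i * Rf ((rr n y - y j ^ 2) + h ^ 2)) _ _ _ d Hd).
  { intros z Hz. rewrite Hg by auto. rewrite rr_upd, upd_neq; auto. }
  apply dscal.
  eapply dval; [|apply (dcomp (fun h => (rr n y - y j ^ 2) + h ^ 2) Rf _ (0 + 2 * y j) Rd)].
  2:{ apply dplus; [apply dconst|apply dsq]. }
  ring. replace (rr n y - y j ^ 2 + y j ^ 2) with (rr n y) by ring. auto.
Qed.

Lemma GL_any n (g : (nat -> R) -> R) (Rf : R -> R) Rd y i j : (j < n)%nat -> (i < n)%nat -> 0 < rr n y ->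
  (forall z, 0 < rr n z -> g z = z i * Rf (rr n z)) ->
  derivable_pt_lim Rf (rr n y) Rd -> exists l, partial_lim g j y l.
Proof.
  intros. destruct (Nat.eq_dec j i). subst. eexists; eapply GL_same; eauto.
  eexists; eapply GL_other; eauto.
Qed.

Lemma fprod_formula n x s : 0 < s ->
  fprod n (fun i => exp (- (x i)^2 / (2 * s)) / sqrt (2 * PI * s)) =
  exp (- rr n x / (2 * s)) * / (sqrt (2 * PI * s)) ^ n.
Proof.
  intros Hs. assert (0 < sqrt (2 * PI * s)) by (apply sqrt_lt_R0; generalize PI_RGT_0; nra).
  induction n.
  - cbn [fprod]. unfold rr; cbn [fsum]. simpl. replace (- 0 / (2 * s)) with 0 by (field; lra).
    rewrite exp_0. field.
  - cbn [fprod]. rewrite IHn. unfold rr; cbn [fsum]. fold (rr n x).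
    replace (- (rr n x + x n ^ 2) / (2 * s)) with (- rr n x / (2 * s) + - (x n)^2 / (2 * s)) by (field; lra).
    rewrite exp_plus. replace (sqrt (2*PI*s) ^ S n) with (sqrt (2*PI*s) ^ n * sqrt (2*PI*s)) by (simpl; ring).
    assert (sqrt (2 * PI * s) ^ n <> 0) by (apply pow_nonzero; lra). field. split; lra.
Qed.

Lemma sqrt_pow y n : 0 < y -> sqrt y ^ n = Rpower y (INR n / 2).
Proof.
  intros. rewrite <- Rpower_sqrt by auto. rewrite <- Rpower_pow by apply Rpower_pos.
  rewrite Rpower_mult. f_equal. field.
Qed.

Definition be n mu := mu - 1 - INR n / 2.
Definition Wc n mu t := / Rpower (2 * PI) (INR n / 2) * / Gamma mu * Rpower t (- mu).

Lemma integrand_formula n mu x t s : 0 < s ->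
  integrand n mu x t s = Wc n mu t * phi (be n mu) (rr n x) t s.
Proof.
  intros Hs. unfold integrand. rewrite fprod_formula by auto.
  assert (HP : 0 < 2 * PI) by (generalize PI_RGT_0; lra).
  rewrite sqrt_pow by nra. rewrite <- Rpower_mult_distr by lra.
  unfold Wc, phi, be. unfold Rminus. rewrite (Rpower_plus (mu + - (1))), Rpower_Ropp, Rpower_Ropp.
  unfold Rdiv. rewrite !Rinv_mult. ring.
Qed.

Lemma dens_spec n mu x t : 0 < rr n x -> 0 < t ->
  is_int_0_inf (integrand n mu x t) (Wc n mu t * Psi (be n mu) (rr n x) t) /\
  dens n mu x t = Wc n mu t * Psi (be n mu) (rr n x) t.
Proof.
  intros Hr Ht.
  assert (H : is_int_0_inf (integrand n mu x t) (Wc n mu t * Psi (be n mu) (rr n x) t)).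
  { apply (is_int_ext (fun s => Wc n mu t * phi (be n mu) (rr n x) t s)).
    intros; rewrite integrand_formula; auto.
    apply is_int_scal. apply Psi_spec; auto. }
  split; auto. unfold dens. apply int_0_inf_eq; auto.
Qed.

Lemma alg nn mu t r K T A0 Am1 A1 A2 A3 : 0 < t ->
  (mu - 1 - nn / 2 + 1) * A0 + r / 2 * A1 = / t * Am1 ->
  (mu - 1 - nn / 2 - 1 + 1) * A1 + r / 2 * A2 = / t * A0 ->
  (mu - 1 - nn / 2 - 1 - 1 + 1) * A2 + r / 2 * A3 = / t * A1 ->
  4 * (K * (- mu * (T / t)) * A0 + K * T * (/ t * / t * Am1)) =
  (2 * mu - nn) * (nn * (- (K * T) * A1) + 2 * r * (- (K * T) * (- / 2 * A2)))
  - (nn * (2 * (1 * (- (K * T) * A1) + r * (- (K * T) * (- / 2 * A2))))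
     + 2 * r * (2 * (1 * (- (K * T) * (- / 2 * A2)) + (1 * (- (K * T) * (- / 2 * A2))
                + r * (- (K * T) * (- / 2 * (- / 2 * A3))))))).
Proof.
  intros Ht E1 E2 E3.
  assert (F1 : Am1 = t * ((mu - 1 - nn / 2 + 1) * A0 + r / 2 * A1)) by (rewrite E1; field; lra).
  assert (F2 : A0 = t * ((mu - 1 - nn / 2 - 1 + 1) * A1 + r / 2 * A2)) by (rewrite E2; field; lra).
  assert (F3 : A1 = t * ((mu - 1 - nn / 2 - 1 - 1 + 1) * A2 + r / 2 * A3)) by (rewrite E3; field; lra).
  rewrite F1. rewrite F2. rewrite F3. field. lra.
Qed.

Lemma fsum_aff n y A Bc : fsum n (fun i => A + 2 * y i ^ 2 * Bc) = INR n * A + 2 * rr n y * Bc.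
Proof.
  rewrite (fsum_ext n _ (fun i => A * 1 + (2 * Bc) * y i ^ 2)) by (intros; ring).
  rewrite fsum_lin, fsum_const. unfold rr. ring.
Qed.

Theorem mainTheorem14 (n : nat) (mu : R) (hn : (1 <= n)%nat) (hmu : 0 < mu) :
  forall t, 0 < t ->
    let f := fun y => dens n mu y t in
    (forall x, nonzero_vec n x -> is_int_0_inf (integrand n mu x t) (f x)) /\
    has_partials n f /\
    (forall i, (i < n)%nat -> has_partials n (pderiv i f)) /\
    has_partials n (x_grad n f) /\
    (forall i, (i < n)%nat -> has_partials n (pderiv i (x_grad n f))) /\
    forall x, nonzero_vec n x ->
      exists qt, derivable_pt_lim (fun s => dens n mu x s) t qt /\
        4 * qt = (2 * mu - INR n) * laplacian n f x - laplacian n (x_grad n f) x.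
Proof.
  intros t Ht f.
  set (W := Wc n mu t). set (b := be n mu).
  assert (F0 : forall z, 0 < rr n z -> f z = W * Psi b (rr n z) t) by (intros; apply dens_spec; auto).
  set (R1 := fun r => - W * Psi (b - 1) r t).
  set (R1d := fun r => - W * (- / 2 * Psi (b - 1 - 1) r t)).
  set (R1dd := fun r => - W * (- / 2 * (- / 2 * Psi (b - 1 - 1 - 1) r t))).
  assert (DR1 : forall r, 0 < r -> derivable_pt_lim R1 r (R1d r)).
  { intros. unfold R1, R1d. apply dscal. apply Psi_dr; auto. }
  assert (DR1d : forall r, 0 < r -> derivable_pt_lim R1d r (R1dd r)).
  { intros. unfold R1d, R1dd. apply dscal. apply dscal. apply Psi_dr; auto. }
  assert (PF : forall z i, (i < n)%nat -> 0 < rr n z ->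
     partial_lim f i z (2 * z i * (W * (- / 2 * Psi (b - 1) (rr n z) t)))).
  { intros. apply (GR n f (fun r => W * Psi b r t)); auto. apply dscal; apply Psi_dr; auto. }
  assert (PF' : forall z i, (i < n)%nat -> 0 < rr n z -> pderiv i f z = z i * R1 (rr n z)).
  { intros. rewrite (pderiv_eq _ _ _ _ (PF z i H H0)). unfold R1. field. }
  assert (PPF : forall y i, (i < n)%nat -> 0 < rr n y ->
     partial_lim (pderiv i f) i y (R1 (rr n y) + 2 * y i ^ 2 * R1d (rr n y))).
  { intros. apply (GL_same n (pderiv i f) R1); auto; intros; apply PF'; auto. }
  set (R2 := fun r => r * R1 r). set (R2d := fun r => 1 * R1 r + r * R1d r).
  assert (DR2 : forall r, 0 < r -> derivable_pt_lim R2 r (R2d r)).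
  { intros. unfold R2, R2d. apply dmul. apply did. apply DR1; auto. }
  assert (XG : forall z, 0 < rr n z -> x_grad n f z = R2 (rr n z)).
  { intros. unfold x_grad. rewrite (fsum_ext n _ (fun i => R1 (rr n z) * z i ^ 2 + 0 * 0)).
    rewrite fsum_lin. change (fsum n (fun i => z i ^ 2)) with (rr n z). unfold R2. ring.
    intros. rewrite PF' by auto. ring. }
  assert (PXG : forall y j, (j < n)%nat -> 0 < rr n y ->
     partial_lim (x_grad n f) j y (2 * y j * R2d (rr n y))).
  { intros. apply (GR n (x_grad n f) R2); auto. }
  set (R3 := fun r => 2 * R2d r).
  set (R3d := fun r => 2 * (1 * R1d r + (1 * R1d r + r * R1dd r))).
  assert (DR3 : forall r, 0 < r -> derivable_pt_lim R3 r (R3d r)).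
  { intros. unfold R3, R3d, R2d. apply dscal. apply dplus. apply dscal. apply DR1; auto.
    apply dmul. apply did. apply DR1d; auto. }
  assert (PXG' : forall z j, (j < n)%nat -> 0 < rr n z -> pderiv j (x_grad n f) z = z j * R3 (rr n z)).
  { intros. rewrite (pderiv_eq _ _ _ _ (PXG z j H H0)). unfold R3. ring. }
  assert (PPXG : forall y i, (i < n)%nat -> 0 < rr n y ->
     partial_lim (pderiv i (x_grad n f)) i y (R3 (rr n y) + 2 * y i ^ 2 * R3d (rr n y))).
  { intros. apply (GL_same n _ R3); auto; intros; apply PXG'; auto. }
  assert (LF : forall y, 0 < rr n y -> laplacian n f y = INR n * R1 (rr n y) + 2 * rr n y * R1d (rr n y)).
  { intros. unfold laplacian. rewrite <- fsum_aff. apply fsum_ext. intros. apply pderiv_eq. apply PPF; auto. }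
  assert (LXG : forall y, 0 < rr n y -> laplacian n (x_grad n f) y = INR n * R3 (rr n y) + 2 * rr n y * R3d (rr n y)).
  { intros. unfold laplacian. rewrite <- fsum_aff. apply fsum_ext. intros. apply pderiv_eq. apply PPXG; auto. }
  split; [|split; [|split; [|split; [|split]]]].
  - intros x Hx. destruct (dens_spec n mu x t (nonzero_rr n x Hx) Ht) as [H1 H2].
    unfold f. rewrite H2. exact H1.
  - intros y i Hy Hi. eexists. apply PF; auto. apply nonzero_rr; auto.
  - intros i Hi y j Hy Hj. assert (Hr := nonzero_rr n y Hy).
    apply (GL_any n (pderiv i f) R1 (R1d (rr n y)) y i j); auto.
  - intros y j Hy Hj. eexists. apply PXG; auto. apply nonzero_rr; auto.
  - intros i Hi y j Hy Hj. assert (Hr := nonzero_rr n y Hy).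
    apply (GL_any n (pderiv i (x_grad n f)) R3 (R3d (rr n y)) y i j); auto.
  - intros x Hx. assert (Hr := nonzero_rr n x Hx). set (r := rr n x) in *.
    set (K := / Rpower (2 * PI) (INR n / 2) * / Gamma mu).
    exists ((K * (- mu * Rpower t (- mu - 1))) * Psi b r t + (K * Rpower t (- mu)) * (/ t * / t * Psi (b + 1) r t)).
    split.
    + apply (dlocal (fun s => (K * Rpower s (- mu)) * Psi b r s) _ t _ t Ht).
      { intros z Hz. apply Rabs_def2 in Hz. destruct (dens_spec n mu x z Hr ltac:(lra)) as [_ E].
        rewrite E. unfold Wc. fold K. reflexivity. }
      apply (dmul (fun s => K * Rpower s (- mu)) (fun s => Psi b r s)).
      apply dscal. apply derivable_pt_lim_power; auto. apply Psi_dt; auto.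
    + rewrite LF, LXG by auto. fold r.
      assert (E1 := Psi_rec b r t Hr Ht).
      assert (E2 := Psi_rec (b - 1) r t Hr Ht).
      assert (E3 := Psi_rec (b - 1 - 1) r t Hr Ht).
      replace (Psi (b - 1 + 1) r t) with (Psi b r t) in E2 by (f_equal; ring).
      replace (Psi (b - 1 - 1 + 1) r t) with (Psi (b - 1) r t) in E3 by (f_equal; ring).
      assert (AL := alg (INR n) mu t r K (Rpower t (- mu)) (Psi b r t) (Psi (b + 1) r t)
                    (Psi (b - 1) r t) (Psi (b - 1 - 1) r t) (Psi (b - 1 - 1 - 1) r t) Ht E1 E2 E3).
      rewrite rp_m1 by auto.
      unfold R3, R3d, R2d, R1, R1d, R1dd, W, Wc. fold K. cbv beta.
      rewrite AL. ring.
Qed.
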